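(* Let $f:\{0,1\}^3\to\{0,1\}$ be $f(x_1,x_2,x_3)=x_1\wedge(x_2\vee x_3)$. Then $Q_E(f)=2$, while every parity decision tree computing $f$ has depth at least $3$.
   Context: Quantum query model: a $t$-query quantum query algorithm on inputs $x\in\{0,1\}^m$ acts on a Hilbert space $\mathcal H_{\rm in}\otimes\mathcal H_{\rm work}\otimes\mathcal H_{\rm out}$, where $\mathcal H_{\rm in}$ has orthonormal basis $|0\rangle,\dots,|m\rangle$, $\mathcal H_{\rm work}$ is a finite-dimensional workspace of arbitrary size, and $\mathcal H_{\rm out}$ is one qubit. It is specified by input-independent unitaries $U_0,\dots,U_t$, and on input $x$ produces the state $U_tO_xU_{t-1}O_x\cdots O_xU_0|0\rangle$ ($t$ applications of $O_x$), where the oracle $O_x$ acts on $\mathcal H_{\rm in}$ by $|i\rangle\mapsto(-1)^{x_i}|i\rangle$ with the convention $x_0=0$ (and as the identity on the other registers). The output is obtained by measuring $\mathcal H_{\rm out}$ in the computational basis. The algorithm computes $h$ exactly if for every $x$ the output equals $h(x)$ with probability $1$. $Q_E(h)$ is the minimum $t$ such that some $t$-query quantum query algorithm computes $h$ exactly. A parity decision tree is a rooted binary tree in which every internal vertex has exactly two children and each internal vertex $v$ is labelled by a subset $S_v$ of input positions, and each leaf is labelled $0$ or $1$. On input $x$, evaluation starts at the root; at internal vertex $v$ the parity $\bigoplus_{i\in S_v}x_i$ is computed, and the left subtree is evaluated if it is $0$ and the right subtree if it is $1$; the output is the label of the leaf reached. Its depth is the maximum length of a root-to-leaf path. *)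

(* Defs.v *)
From HB Require Import structures.
From mathcomp Require Import all_boot all_order all_algebra.
Set Implicit Arguments. Unset Strict Implicit. Unset Printing Implicit Defensive.
Import Order.TTheory GRing.Theory Num.Theory.
Local Open Scope ring_scope.

(** Amplitudes live in an arbitrary numClosedFieldType C (e.g. the complex
    numbers; conjugation is Num.conj).
    The Hilbert space H_in (x) H_work (x) H_out has orthonormal basis indexed by
    I_(m+1) (input register |0>..|m>) x I_(w+1) (workspace of dimension w+1,
    arbitrary) x bool (output qubit). *)
Notation qidx m w := ('I_m.+1 * 'I_w.+1 * bool)%type.

(* Operators as matrices given by their entries U i j = <i|U|j>. *)
Definition is_unitary (C : numClosedFieldType) (T : finType) (U : T -> T -> C)
  : Prop :=
  forall i j : T, \sum_(k : T) (U k i)^* * U k j = (i == j)%:R.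

Definition mapply (C : numClosedFieldType) (T : finType) (U : T -> T -> C)
  (v : T -> C) : T -> C := fun i => \sum_(j : T) U i j * v j.

(* x_i for i in {0..m}, with the convention x_0 = 0; the input register
   index i >= 1 corresponds to input bit x (i-1). *)
Definition xbit (m : nat) (x : 'I_m -> bool) (i : 'I_m.+1) : bool :=
  match unlift ord0 i with None => false | Some j => x j end.

Definition oracle (C : numClosedFieldType) (m w : nat) (x : 'I_m -> bool)
  (v : qidx m w -> C) : qidx m w -> C :=
  fun s => (-1) ^+ xbit x s.1.1 * v s.

Definition init (C : numClosedFieldType) (m w : nat) : qidx m w -> C :=
  fun s => (s == (ord0, ord0, false))%:R.

Fixpoint qrun (C : numClosedFieldType) (m w : nat) (x : 'I_m -> bool)
  (U : nat -> qidx m w -> qidx m w -> C) (k : nat) : qidx m w -> C :=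
  match k with
  | 0 => mapply (U 0%N) (@init C m w)
  | k'.+1 => mapply (U k) (oracle x (qrun x U k'))
  end.

Definition prob_out (C : numClosedFieldType) (m w : nat) (v : qidx m w -> C)
  (b : bool) : C :=
  \sum_(s : qidx m w | s.2 == b) `|v s| ^+ 2.

Definition computes_exactly (C : numClosedFieldType) (m w t : nat)
  (U : nat -> qidx m w -> qidx m w -> C) (h : ('I_m -> bool) -> bool) : Prop :=
  (forall k, (k <= t)%N -> is_unitary (U k)) /\
  (forall x : 'I_m -> bool, prob_out (qrun x U t) (h x) = 1).

Definition exact_in_queries (C : numClosedFieldType) (m : nat)
  (h : ('I_m -> bool) -> bool) (t : nat) : Prop :=
  exists (w : nat) (U : nat -> qidx m w -> qidx m w -> C),
    @computes_exactly C m w t U h.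

Inductive pdt (m : nat) : Type :=
| PLeaf of bool
| PNode of {set 'I_m} & pdt m & pdt m.

Fixpoint pdt_eval (m : nat) (T : pdt m) (x : 'I_m -> bool) : bool :=
  match T with
  | PLeaf b => b
  | PNode P l r =>
      if odd (\sum_(i in P) nat_of_bool (x i)) then pdt_eval r x else pdt_eval l x
  end.

Fixpoint pdt_depth (m : nat) (T : pdt m) : nat :=
  match T with
  | PLeaf _ => 0
  | PNode _ l r => (maxn (pdt_depth l) (pdt_depth r)).+1
  end.

Definition f3 (x : 'I_3 -> bool) : bool :=
  x (inord 0) && (x (inord 1) || x (inord 2)).

(* Main.v *)
Require Import Defs.
From mathcomp Require Import all_boot all_order all_algebra.
From mathcomp Require Import ring.
Set Implicit Arguments. Unset Strict Implicit. Unset Printing Implicit Defensive.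
Import Order.TTheory GRing.Theory Num.Theory.
Local Open Scope ring_scope.

Notation Q := (qidx 3 1).
Definition tbl : seq (seq (seq (bool * nat * nat))) := [::
[::
  [:: (false,1,2); (false,1,2); (false,0,1); (false,0,1); (false,0,1); (false,0,1); (false,0,1); (false,0,1); (false,1,2); (false,0,1); (false,0,1); (false,0,1); (false,1,2); (false,0,1); (false,0,1); (false,0,1)];
  [:: (false,1,2); (false,1,2); (false,0,1); (false,0,1); (false,0,1); (false,0,1); (false,0,1); (false,0,1); (true,1,2); (false,0,1); (false,0,1); (false,0,1); (true,1,2); (false,0,1); (false,0,1); (false,0,1)];
  [:: (false,0,1); (false,0,1); (false,1,1); (false,0,1); (false,0,1); (false,0,1); (false,0,1); (false,0,1); (false,0,1); (false,0,1); (false,0,1); (false,0,1); (false,0,1); (false,0,1); (false,0,1); (false,0,1)];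
  [:: (false,0,1); (false,0,1); (false,0,1); (false,1,1); (false,0,1); (false,0,1); (false,0,1); (false,0,1); (false,0,1); (false,0,1); (false,0,1); (false,0,1); (false,0,1); (false,0,1); (false,0,1); (false,0,1)];
  [:: (false,0,1); (false,0,1); (false,0,1); (false,0,1); (false,1,1); (false,0,1); (false,0,1); (false,0,1); (false,0,1); (false,0,1); (false,0,1); (false,0,1); (false,0,1); (false,0,1); (false,0,1); (false,0,1)];
  [:: (false,0,1); (false,0,1); (false,0,1); (false,0,1); (false,0,1); (false,1,1); (false,0,1); (false,0,1); (false,0,1); (false,0,1); (false,0,1); (false,0,1); (false,0,1); (false,0,1); (false,0,1); (false,0,1)];
  [:: (false,0,1); (false,0,1); (false,0,1); (false,0,1); (false,0,1); (false,0,1); (false,1,1); (false,0,1); (false,0,1); (false,0,1); (false,0,1); (false,0,1); (false,0,1); (false,0,1); (false,0,1); (false,0,1)];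
  [:: (false,0,1); (false,0,1); (false,0,1); (false,0,1); (false,0,1); (false,0,1); (false,0,1); (false,1,1); (false,0,1); (false,0,1); (false,0,1); (false,0,1); (false,0,1); (false,0,1); (false,0,1); (false,0,1)];
  [:: (false,1,2); (true,1,2); (false,0,1); (false,0,1); (false,0,1); (false,0,1); (false,0,1); (false,0,1); (false,1,2); (false,0,1); (false,0,1); (false,0,1); (true,1,2); (false,0,1); (false,0,1); (false,0,1)];
  [:: (false,0,1); (false,0,1); (false,0,1); (false,0,1); (false,0,1); (false,0,1); (false,0,1); (false,0,1); (false,0,1); (false,1,1); (false,0,1); (false,0,1); (false,0,1); (false,0,1); (false,0,1); (false,0,1)];
  [:: (false,0,1); (false,0,1); (false,0,1); (false,0,1); (false,0,1); (false,0,1); (false,0,1); (false,0,1); (false,0,1); (false,0,1); (false,1,1); (false,0,1); (false,0,1); (false,0,1); (false,0,1); (false,0,1)];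
  [:: (false,0,1); (false,0,1); (false,0,1); (false,0,1); (false,0,1); (false,0,1); (false,0,1); (false,0,1); (false,0,1); (false,0,1); (false,0,1); (false,1,1); (false,0,1); (false,0,1); (false,0,1); (false,0,1)];
  [:: (false,1,2); (true,1,2); (false,0,1); (false,0,1); (false,0,1); (false,0,1); (false,0,1); (false,0,1); (true,1,2); (false,0,1); (false,0,1); (false,0,1); (false,1,2); (false,0,1); (false,0,1); (false,0,1)];
  [:: (false,0,1); (false,0,1); (false,0,1); (false,0,1); (false,0,1); (false,0,1); (false,0,1); (false,0,1); (false,0,1); (false,0,1); (false,0,1); (false,0,1); (false,0,1); (false,1,1); (false,0,1); (false,0,1)];
  [:: (false,0,1); (false,0,1); (false,0,1); (false,0,1); (false,0,1); (false,0,1); (false,0,1); (false,0,1); (false,0,1); (false,0,1); (false,0,1); (false,0,1); (false,0,1); (false,0,1); (false,1,1); (false,0,1)];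
  [:: (false,0,1); (false,0,1); (false,0,1); (false,0,1); (false,0,1); (false,0,1); (false,0,1); (false,0,1); (false,0,1); (false,0,1); (false,0,1); (false,0,1); (false,0,1); (false,0,1); (false,0,1); (false,1,1)]];
[::
  [:: (false,0,1); (false,0,1); (false,0,1); (false,0,1); (false,0,1); (false,0,1); (false,0,1); (false,1,2); (false,0,1); (false,1,2); (false,1,2); (false,0,1); (false,0,1); (false,1,2); (false,0,1); (false,0,1)];
  [:: (false,0,1); (false,0,1); (false,0,1); (false,0,1); (false,0,1); (false,0,1); (false,0,1); (true,1,2); (false,0,1); (false,1,2); (true,1,2); (false,0,1); (false,0,1); (false,1,2); (false,0,1); (false,0,1)];
  [:: (false,1,4); (false,1,4); (false,5,8); (true,1,8); (true,1,4); (false,1,8); (false,3,8); (false,0,1); (false,0,1); (false,0,1); (false,0,1); (false,0,1); (true,1,2); (false,0,1); (false,0,1); (false,0,1)];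
  [:: (false,1,4); (false,1,4); (true,1,8); (false,5,8); (false,1,4); (false,3,8); (false,1,8); (false,0,1); (true,1,2); (false,0,1); (false,0,1); (false,0,1); (false,0,1); (false,0,1); (false,0,1); (false,0,1)];
  [:: (false,0,1); (false,0,1); (true,1,4); (false,1,4); (false,1,2); (true,1,4); (false,1,4); (false,0,1); (false,1,2); (false,0,1); (false,0,1); (false,0,1); (true,1,2); (false,0,1); (false,0,1); (false,0,1)];
  [:: (true,1,4); (true,1,4); (false,1,8); (false,3,8); (true,1,4); (false,5,8); (true,1,8); (false,0,1); (false,1,2); (false,0,1); (false,0,1); (false,0,1); (false,0,1); (false,0,1); (false,0,1); (false,0,1)];
  [:: (true,1,4); (true,1,4); (false,3,8); (false,1,8); (false,1,4); (true,1,8); (false,5,8); (false,0,1); (false,0,1); (false,0,1); (false,0,1); (false,0,1); (false,1,2); (false,0,1); (false,0,1); (false,0,1)];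
  [:: (false,1,2); (true,1,2); (false,0,1); (false,0,1); (false,0,1); (false,0,1); (false,0,1); (false,1,2); (false,0,1); (false,0,1); (true,1,2); (false,0,1); (false,0,1); (false,0,1); (false,0,1); (false,0,1)];
  [:: (false,1,4); (false,1,4); (false,0,1); (true,1,2); (false,1,2); (false,1,2); (false,0,1); (false,0,1); (false,1,4); (false,0,1); (false,0,1); (false,0,1); (false,1,4); (false,0,1); (false,0,1); (false,0,1)];
  [:: (false,1,4); (false,1,4); (false,1,4); (false,1,4); (false,0,1); (true,1,4); (true,1,4); (false,0,1); (false,1,4); (false,1,2); (false,0,1); (false,0,1); (false,1,4); (true,1,2); (false,0,1); (false,0,1)];
  [:: (false,1,2); (true,1,2); (false,0,1); (false,0,1); (false,0,1); (false,0,1); (false,0,1); (true,1,2); (false,0,1); (false,0,1); (false,1,2); (false,0,1); (false,0,1); (false,0,1); (false,0,1); (false,0,1)];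
  [:: (false,0,1); (false,0,1); (false,0,1); (false,0,1); (false,0,1); (false,0,1); (false,0,1); (false,0,1); (false,0,1); (false,0,1); (false,0,1); (false,1,1); (false,0,1); (false,0,1); (false,0,1); (false,0,1)];
  [:: (false,1,4); (false,1,4); (true,1,2); (false,0,1); (true,1,2); (false,0,1); (false,1,2); (false,0,1); (false,1,4); (false,0,1); (false,0,1); (false,0,1); (false,1,4); (false,0,1); (false,0,1); (false,0,1)];
  [:: (false,1,4); (false,1,4); (false,1,4); (false,1,4); (false,0,1); (true,1,4); (true,1,4); (false,0,1); (false,1,4); (true,1,2); (false,0,1); (false,0,1); (false,1,4); (false,1,2); (false,0,1); (false,0,1)];
  [:: (false,0,1); (false,0,1); (false,0,1); (false,0,1); (false,0,1); (false,0,1); (false,0,1); (false,0,1); (false,0,1); (false,0,1); (false,0,1); (false,0,1); (false,0,1); (false,0,1); (false,1,1); (false,0,1)];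
  [:: (false,0,1); (false,0,1); (false,0,1); (false,0,1); (false,0,1); (false,0,1); (false,0,1); (false,0,1); (false,0,1); (false,0,1); (false,0,1); (false,0,1); (false,0,1); (false,0,1); (false,0,1); (false,1,1)]];
[::
  [:: (false,0,1); (false,0,1); (false,0,1); (false,0,1); (false,0,1); (false,0,1); (false,0,1); (false,0,1); (false,1,2); (false,1,2); (false,0,1); (false,0,1); (false,1,2); (false,1,2); (false,0,1); (false,0,1)];
  [:: (false,0,1); (false,0,1); (false,0,1); (false,1,2); (false,1,2); (false,1,2); (false,0,1); (false,0,1); (true,1,4); (true,1,4); (false,0,1); (false,0,1); (false,1,4); (false,1,4); (false,0,1); (false,0,1)];
  [:: (false,0,1); (false,0,1); (false,0,1); (false,1,2); (true,1,2); (true,1,2); (false,0,1); (false,0,1); (true,1,4); (true,1,4); (false,0,1); (false,0,1); (false,1,4); (false,1,4); (false,0,1); (false,0,1)];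
  [:: (false,1,8); (false,9,16); (false,1,16); (false,7,16); (false,0,1); (false,0,1); (false,1,2); (false,0,1); (false,11,32); (false,3,32); (false,0,1); (false,0,1); (true,7,32); (true,7,32); (false,0,1); (false,0,1)];
  [:: (true,1,8); (true,1,16); (false,7,16); (false,1,16); (false,1,2); (true,1,2); (false,0,1); (true,1,2); (true,3,32); (false,5,32); (false,0,1); (false,0,1); (true,1,32); (true,1,32); (false,0,1); (false,0,1)];
  [:: (true,1,8); (true,1,16); (false,7,16); (false,1,16); (true,1,2); (false,1,2); (false,0,1); (true,1,2); (true,3,32); (false,5,32); (false,0,1); (false,0,1); (true,1,32); (true,1,32); (false,0,1); (false,0,1)];
  [:: (true,1,4); (false,3,8); (false,3,8); (false,1,8); (false,0,1); (false,0,1); (true,1,2); (false,1,2); (true,3,16); (false,5,16); (false,0,1); (false,0,1); (true,1,16); (true,1,16); (false,0,1); (false,0,1)];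
  [:: (false,0,1); (true,1,2); (false,1,2); (false,0,1); (false,0,1); (false,0,1); (false,1,2); (false,1,2); (false,0,1); (false,0,1); (false,0,1); (false,0,1); (false,0,1); (false,0,1); (false,0,1); (false,0,1)];
  [:: (false,3,8); (true,5,16); (false,3,16); (false,5,16); (false,0,1); (false,0,1); (true,1,2); (false,0,1); (false,17,32); (true,7,32); (false,0,1); (false,0,1); (true,5,32); (true,5,32); (false,0,1); (false,0,1)];
  [:: (false,1,2); (true,1,4); (true,1,4); (false,1,4); (false,0,1); (false,0,1); (false,0,1); (false,0,1); (true,3,8); (false,5,8); (false,0,1); (false,0,1); (true,1,8); (true,1,8); (false,0,1); (false,0,1)];
  [:: (false,0,1); (false,0,1); (false,0,1); (false,0,1); (false,0,1); (false,0,1); (false,0,1); (false,0,1); (false,0,1); (false,0,1); (false,1,1); (false,0,1); (false,0,1); (false,0,1); (false,0,1); (false,0,1)];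
  [:: (false,0,1); (false,0,1); (false,0,1); (false,0,1); (false,0,1); (false,0,1); (false,0,1); (false,0,1); (false,0,1); (false,0,1); (false,0,1); (false,1,1); (false,0,1); (false,0,1); (false,0,1); (false,0,1)];
  [:: (false,1,2); (false,1,4); (false,1,4); (true,1,4); (false,0,1); (false,0,1); (false,0,1); (false,0,1); (true,1,8); (true,1,8); (false,0,1); (false,0,1); (false,5,8); (true,3,8); (false,0,1); (false,0,1)];
  [:: (false,1,2); (false,1,4); (false,1,4); (true,1,4); (false,0,1); (false,0,1); (false,0,1); (false,0,1); (true,1,8); (true,1,8); (false,0,1); (false,0,1); (true,3,8); (false,5,8); (false,0,1); (false,0,1)];
  [:: (false,0,1); (false,0,1); (false,0,1); (false,0,1); (false,0,1); (false,0,1); (false,0,1); (false,0,1); (false,0,1); (false,0,1); (false,0,1); (false,0,1); (false,0,1); (false,0,1); (false,1,1); (false,0,1)];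
  [:: (false,0,1); (false,0,1); (false,0,1); (false,0,1); (false,0,1); (false,0,1); (false,0,1); (false,0,1); (false,0,1); (false,0,1); (false,0,1); (false,0,1); (false,0,1); (false,0,1); (false,0,1); (false,1,1)]]].

Definition ent (p : bool * nat * nat) : rat := (-1) ^+ p.1.1 * (p.1.2)%:R / (p.2)%:R.
Definition code (s : Q) : nat := (4 * s.1.1 + 2 * s.1.2 + s.2)%N.
Definition Uq (k : nat) (i j : Q) : rat :=
  ent (nth (false,0,1)%N (nth [::] (nth [::] tbl k) (code i)) (code j)).
Definition mkQ (n : nat) : Q :=
  ((Ordinal (ltn_pmod (n %/ 4) (isT : 0 < 4)%N), Ordinal (ltn_pmod (n %/ 2) (isT : 0 < 2)%N)), odd n).
Definition allQ : seq Q := map mkQ (iota 0 16).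
Definition sumQ (F : Q -> rat) := foldr (fun l acc => F l + acc) 0 allQ.

Lemma mkQK s : mkQ (code s) = s.
Proof.
apply/eqP; case: s => [[[r hr] [w hw]] b].
case: r hr => [|[|[|[|r]]]] hr //; case: w hw => [|[|w]] hw //; by case: b.
Qed.

Lemma code_lt s : (code s < 16)%N.
Proof.
case: s => [[[r hr] [w hw]] b].
case: r hr => [|[|[|[|r]]]] hr //; case: w hw => [|[|w]] hw //; by case: b.
Qed.

Lemma memQ s : s \in allQ.
Proof.
rewrite -(mkQK s); apply: map_f; rewrite mem_iota add0n; exact: code_lt.
Qed.

Lemma uniqQ : uniq allQ.
Proof. by vm_compute. Qed.

Lemma big_allQ (R : nmodType) (F : Q -> R) : \sum_(l : Q) F l = \sum_(l <- allQ) F l.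
Proof.
apply: perm_big; apply: uniq_perm; [exact: index_enum_uniq | exact: uniqQ |].
by move=> x; rewrite mem_index_enum memQ.
Qed.

Lemma big_foldr (F : Q -> rat) (s : seq Q) :
  \sum_(l <- s) F l = foldr (fun l acc => F l + acc) 0 s.
Proof. by elim: s => [|a s IH]; rewrite ?big_nil ?big_cons ?IH. Qed.

Lemma sumQE (F : Q -> rat) : \sum_(l : Q) F l = sumQ F.
Proof. by rewrite big_allQ big_foldr. Qed.

Definition uchk (k : nat) : bool :=
  all (fun i => all (fun j => sumQ (fun l => Uq k l i * Uq k l j) == (i == j)%:R) allQ) allQ.
Lemma uchk_ok : [&& uchk 0, uchk 1 & uchk 2].
Proof. vm_compute. reflexivity. Qed.

Definition sgnb (b : bool * bool * bool) (r : 'I_4) : rat :=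
  (-1) ^+ nth false [:: false; b.1.1; b.1.2; b.2] r.
Definition stS (b : bool * bool * bool) (k : nat) (v : seq rat) : seq rat :=
  [seq sumQ (fun j => Uq k (mkQ n) j * (sgnb b j.1.1 * nth 0 v (code j))) | n <- iota 0 16].
Definition st0 : seq rat :=
  [seq sumQ (fun j => Uq 0 (mkQ n) j * (j == (ord0, ord0, false))%:R) | n <- iota 0 16].
Fixpoint qrunl (b : bool * bool * bool) (k : nat) : seq rat :=
  match k with 0 => st0 | k'.+1 => stS b k (qrunl b k') end.
Definition goodb (b : bool * bool * bool) : bool :=
  sumQ (fun s => if s.2 == b.1.1 && (b.1.2 || b.2) then (nth 0 (qrunl b 2) (code s)) ^+ 2 else 0) == 1.

Lemma goodb_ok b : goodb b.
Proof. by case: b => [[[] []] []]; vm_compute. Qed.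

Lemma nth_map_code (F : Q -> rat) s :
  nth 0 [seq F (mkQ n) | n <- iota 0 16] (code s) = F s.
Proof. by rewrite (nth_map 0%N) ?size_iota ?code_lt // nth_iota ?code_lt // add0n mkQK. Qed.

Definition UC (C : numClosedFieldType) (k : nat) (i j : Q) : C := ratr (Uq k i j).

Lemma UC_unitary (C : numClosedFieldType) k : (k <= 2)%N -> Defs.is_unitary (UC C k).
Proof.
move=> hk i j.
have : uchk k.
  case/and3P: uchk_ok => h0 h1 h2.
  case: k hk => [|[|[|k]]] hk; [exact: h0|exact: h1|exact: h2|exfalso].
  by move: hk.
move/allP/(_ i (memQ i))/allP/(_ j (memQ j))/eqP => H.
rewrite /UC.
under eq_bigr do rewrite fmorph_rat -rmorphM.
by rewrite -rmorph_sum sumQE H rmorph_nat.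
Qed.

Definition bx (x : 'I_3 -> bool) := (x (inord 0), x (inord 1), x (inord 2)).

Lemma xbitE (x : 'I_3 -> bool) (r : 'I_4) :
  nth false [:: false; (bx x).1.1; (bx x).1.2; (bx x).2] r = xbit x r.
Proof.
rewrite /xbit; case: (unliftP ord0 r) => [j -> | ->].
  rewrite lift0 /=.
  case: j => [[|[|[|j]]] hj] //=; congr x; apply: val_inj; by rewrite /= inordK.
by [].
Qed.

Lemma qrun_transfer (C : numClosedFieldType) (x : 'I_3 -> bool) k s :
  qrun x (UC C) k s = ratr (nth 0 (qrunl (bx x) k) (code s)).
Proof.
elim: k s => [|k IH] s /=.
  rewrite /mapply /st0 (nth_map_code (fun q => sumQ (fun j => Uq 0 q j * (j == (ord0, ord0, false))%:R))).
  rewrite -sumQE rmorph_sum.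
  apply: eq_bigr => j _; by rewrite rmorphM rmorph_nat.
rewrite /mapply /stS (nth_map_code (fun q => sumQ (fun j => Uq k.+1 q j *
  (sgnb (bx x) j.1.1 * nth 0 (qrunl (bx x) k) (code j))))).
rewrite -sumQE rmorph_sum.
apply: eq_bigr => j _; rewrite /oracle IH /UC (rmorphM _ (Uq _ _ _)) (rmorphM _ (sgnb _ _)).
by rewrite /sgnb rmorph_sign xbitE.
Qed.

Lemma upper (C : numClosedFieldType) : exact_in_queries C f3 2.
Proof.
exists 1%N, (UC C); split; first exact: UC_unitary.
move=> x.
rewrite /prob_out.
under eq_bigr do rewrite normCK qrun_transfer fmorph_rat -rmorphM.
rewrite -rmorph_sum big_mkcond /= big_allQ big_foldr.
have := goodb_ok (bx x); rewrite /goodb /sumQ => /eqP H.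
rewrite -[RHS](rmorph1 (@ratr C)) -H.
congr ratr; apply: eq_bigr => s _.
Qed.

Definition Xin (b0 b1 b2 : bool) : 'I_3 -> bool := fun i => nth false [:: b0; b1; b2] i.
Lemma Xin0 b0 b1 b2 : Xin b0 b1 b2 (inord 0) = b0. Proof. by rewrite /Xin inordK. Qed.
Lemma Xin1 b0 b1 b2 : Xin b0 b1 b2 (inord 1) = b1. Proof. by rewrite /Xin inordK. Qed.
Lemma Xin2 b0 b1 b2 : Xin b0 b1 b2 (inord 2) = b2. Proof. by rewrite /Xin inordK. Qed.

Section Lower.
Variable C : numClosedFieldType.

Definition sg (b : bool) : C := (-1) ^+ b.
Definition Tf (g : ('I_3 -> bool) -> C) : C :=
  \sum_(b0 : bool) \sum_(b1 : bool) \sum_(b2 : bool) sg b0 * sg b1 * sg b2 * g (Xin b0 b1 b2).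

Lemma Tf_ext g h : (forall x, g x = h x) -> Tf g = Tf h.
Proof.
move=> H; apply: eq_bigr => b0 _; apply: eq_bigr => b1 _; apply: eq_bigr => b2 _.
by rewrite H.
Qed.

Lemma Tf_sum (I : Type) (r : seq I) (P : pred I) (h : I -> ('I_3 -> bool) -> C) :
  Tf (fun x => \sum_(i <- r | P i) h i x) = \sum_(i <- r | P i) Tf (h i).
Proof.
rewrite /Tf.
under eq_bigr do under eq_bigr do under eq_bigr do rewrite mulr_sumr.
under eq_bigr do under eq_bigr do rewrite exchange_big.
under eq_bigr do rewrite exchange_big.
by rewrite exchange_big.
Qed.

Lemma Tf_scale (c : C) h : Tf (fun x => c * h x) = c * Tf h.
Proof.
rewrite /Tf mulr_sumr; apply: eq_bigr => b0 _; rewrite mulr_sumr.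
apply: eq_bigr => b1 _; rewrite mulr_sumr; apply: eq_bigr => b2 _.
by rewrite mulrCA.
Qed.

Lemma Tf_const (c : C) : Tf (fun _ => c) = 0.
Proof. by rewrite /Tf !big_bool /sg /=; ring. Qed.

Lemma xbitX b0 b1 b2 (r : 'I_4) :
  xbit (Xin b0 b1 b2) r = nth false [:: false; b0; b1; b2] r.
Proof.
rewrite /xbit; case: (unliftP ord0 r) => [j -> | ->] //.
Qed.

Lemma Tf_sgn2 (r r' : 'I_4) :
  Tf (fun x => (-1) ^+ xbit x r * (-1) ^+ xbit x r') = 0.
Proof.
rewrite /Tf; under eq_bigr do under eq_bigr do under eq_bigr do rewrite !xbitX.
rewrite !big_bool /sg.
by case: r => [[|[|[|[|r]]]] hr] //; case: r' => [[|[|[|[|r']]]] hr'] //=; ring.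
Qed.

Lemma Tf_f3 : Tf (fun x => (f3 x)%:R) = 1.
Proof.
rewrite /Tf; under eq_bigr do under eq_bigr do under eq_bigr do rewrite /f3 Xin0 Xin1 Xin2.
rewrite !big_bool /sg /=; ring.
Qed.


Lemma sum_delta (T : finType) (F : T -> C) (j : T) : \sum_(k : T) F k * (k == j)%:R = F j.
Proof.
rewrite (bigD1 j) //= eqxx mulr1 big1 ?addr0 // => k /negbTE ->; by rewrite mulr0.
Qed.

Lemma norm_mapply (T : finType) (U : T -> T -> C) (v : T -> C) : Defs.is_unitary U ->
  \sum_i `|mapply U v i| ^+ 2 = \sum_i `|v i| ^+ 2.
Proof.
move=> HU.
transitivity (\sum_i \sum_j \sum_k (v j * (v k)^*) * ((U i k)^* * U i j)).
  apply: eq_bigr => i _; rewrite normCK /mapply rmorph_sum mulr_suml.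
  apply: eq_bigr => j _; rewrite mulr_sumr; apply: eq_bigr => k _.
  rewrite rmorphM; ring.
rewrite exchange_big /=.
under eq_bigr do rewrite exchange_big /=.
transitivity (\sum_j \sum_k (v j * (v k)^*) * (k == j)%:R).
  apply: eq_bigr => j _; apply: eq_bigr => k _; by rewrite -mulr_sumr HU.
apply: eq_bigr => j _; by rewrite sum_delta normCK.
Qed.

Lemma norm_oracle m w (x : 'I_m -> bool) (v : qidx m w -> C) :
  \sum_i `|oracle x v i| ^+ 2 = \sum_i `|v i| ^+ 2.
Proof. by apply: eq_bigr => i _; rewrite /oracle normrM normr_sign mul1r. Qed.

Lemma norm_init m w : \sum_i `|@init C m w i| ^+ 2 = 1.
Proof.
rewrite (bigD1 (ord0, ord0, false)) //= /init eqxx normr1 expr1n big1 ?addr0 //.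
by move=> i /negbTE ->; rewrite normr0 expr0n.
Qed.

Lemma prob_split m w (v : qidx m w -> C) :
  \sum_i `|v i| ^+ 2 = prob_out v true + prob_out v false.
Proof.
rewrite /prob_out (bigID (fun s : qidx m w => s.2 == true)) /=.
congr (_ + _); apply: eq_bigl => s; by case: s.2.
Qed.

Lemma lower (t : nat) : (t < 2)%N -> ~ exact_in_queries C f3 t.
Proof.
move=> ht [w [U [HU Hx]]].
have Hn : forall x, \sum_i `|qrun x U t i| ^+ 2 = 1.
  move=> x; case: t ht HU Hx => [|[|t]] // _ HU _ /=.
    by rewrite norm_mapply ?norm_init //; exact: HU.
  by rewrite norm_mapply ?norm_oracle ?norm_mapply ?norm_init //; apply: HU.
pose g := fun x => prob_out (qrun x U t) true.
have Hg : forall x, g x = (f3 x)%:R.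
  move=> x; have := Hx x; have := Hn x; rewrite prob_split /g.
  move=> Hs; case: (f3 x) => /= H; first by rewrite H.
  by move: Hs; rewrite H => /(congr1 (fun z => z - 1)); rewrite addrK subrr.
have H1 : Tf g = 1 by rewrite (Tf_ext Hg) Tf_f3.
suff : Tf g = 0 by rewrite H1 => /eqP; rewrite oner_eq0.
case: t ht HU Hx Hn @g Hg H1 => [|[|t]] // _ HU _ _ g _ _.
  by rewrite (@Tf_ext _ (fun _ => prob_out (mapply (U 0%N) (@init C 3 w)) true)) ?Tf_const.
have key : forall (v0 : qidx 3 w -> C) (x : 'I_3 -> bool),
  prob_out (mapply (U 1%N) (oracle x v0)) true = \sum_(s : qidx 3 w | s.2 == true) \sum_j \sum_k
   ((U 1%N s j * v0 j * (U 1%N s k * v0 k)^*) * ((-1) ^+ xbit x j.1.1 * (-1) ^+ xbit x k.1.1)).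
  move=> v0 x; rewrite /prob_out; apply: eq_bigr => s _.
  rewrite normCK /mapply /oracle rmorph_sum mulr_suml; apply: eq_bigr => j _.
  rewrite mulr_sumr; apply: eq_bigr => k _.
  rewrite !rmorphM rmorph_sign.
  move: ((-1) ^+ xbit x j.1.1) ((-1) ^+ xbit x k.1.1) => a b.
  ring.
rewrite (Tf_ext (key (mapply (U 0%N) (@init C 3 w)))).
rewrite Tf_sum big1 // => s _; rewrite Tf_sum big1 // => j _; rewrite Tf_sum big1 // => k _.
by rewrite Tf_scale Tf_sgn2 mulr0.
Qed.

End Lower.

Local Close Scope ring_scope.

Lemma oddif (c b : bool) : odd (if c then nat_of_bool b else 0%N) = c && b.
Proof. by case: c; case: b. Qed.

Lemma parityE (P : {set 'I_3}) (x : 'I_3 -> bool) :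
  odd (\sum_(i in P) nat_of_bool (x i)) =
  ((inord 0 \in P) && x (inord 0)) (+) ((inord 1 \in P) && x (inord 1))
     (+) ((inord 2 \in P) && x (inord 2)).
Proof.
have e0 : ord0 = inord 0 :> 'I_3 by apply: val_inj; rewrite /= inordK.
have e1 : lift ord0 ord0 = inord 1 :> 'I_3 by apply: val_inj; rewrite /= inordK.
have e2 : lift ord0 (lift ord0 ord0) = inord 2 :> 'I_3 by apply: val_inj; rewrite /= inordK.
rewrite big_mkcond /= !big_ord_recl big_ord0 addn0.
rewrite e2 e1 e0 !oddD !oddif.
by rewrite addbA.
Qed.

Definition aff (c q0 q1 q2 x0 x1 x2 : bool) := c (+) (q0 && x0) (+) (q1 && x1) (+) (q2 && x2).

Lemma depth1 (l : pdt 3) : (pdt_depth l <= 1)%N ->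
  exists c q0 q1 q2, forall x, pdt_eval l x = aff c q0 q1 q2 (x (inord 0)) (x (inord 1)) (x (inord 2)).
Proof.
case: l => [a|Q l1 r1] /=.
  by move=> _; exists a, false, false, false => x; rewrite /aff !addbF.
case: l1 => [a1|? ? ?] /=; last by rewrite ltnS geq_max.
case: r1 => [a2|? ? ?] /=; last by rewrite ltnS geq_max andbF.
move=> _.
exists a1, ((a1 (+) a2) && (inord 0 \in Q)), ((a1 (+) a2) && (inord 1 \in Q)),
  ((a1 (+) a2) && (inord 2 \in Q)) => x.
rewrite parityE /aff.
move: (inord 0 \in Q) (inord 1 \in Q) (inord 2 \in Q) (x (inord 0)) (x (inord 1)) (x (inord 2)).
by case: a1; case: a2 => [] [] [] [] [] [] [].
Qed.

Definition G (p0 p1 p2 c q0 q1 q2 d r0 r1 r2 x0 x1 x2 : bool) :=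
  if (p0 && x0) (+) (p1 && x1) (+) (p2 && x2) then aff d r0 r1 r2 x0 x1 x2
  else aff c q0 q1 q2 x0 x1 x2.

Definition xs8 (h : bool -> bool -> bool -> bool) :=
  h false false false (+) h false false true (+) h false true false (+) h false true true
  (+) h true false false (+) h true false true (+) h true true false (+) h true true true.

Lemma keyG p0 p1 p2 c q0 q1 q2 d r0 r1 r2 :
  xs8 (G p0 p1 p2 c q0 q1 q2 d r0 r1 r2) = false.
Proof.
by case: p0; case: p1; case: p2; case: c; case: q0; case: q1; case: q2; case: d;
  case: r0; case: r1; case: r2.
Qed.

Lemma pdt_lower (T : pdt 3) : (forall x : 'I_3 -> bool, pdt_eval T x = f3 x) ->
     (3 <= pdt_depth T)%N.
Proof.
move=> H; rewrite leqNgt; apply/negP; rewrite ltnS => hd.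
have [p0 [p1 [p2 [c [q0 [q1 [q2 [d [r0 [r1 [r2 HG]]]]]]]]]]] :
  exists p0 p1 p2 c q0 q1 q2 d r0 r1 r2, forall x, pdt_eval T x =
    G p0 p1 p2 c q0 q1 q2 d r0 r1 r2 (x (inord 0)) (x (inord 1)) (x (inord 2)).
  case: T H hd => [b|P l r] _ /=.
    move=> _; exists false, false, false, b, false, false, false, b, false, false, false => x.
    by rewrite /G /aff /= !addbF.
  rewrite ltnS geq_max => /andP[hl hr].
  have [c [q0 [q1 [q2 Hl]]]] := depth1 hl.
  have [d [r0 [r1 [r2 Hr]]]] := depth1 hr.
  exists (inord 0 \in P), (inord 1 \in P), (inord 2 \in P), c, q0, q1, q2, d, r0, r1, r2.
  by move=> x; rewrite parityE Hl Hr.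
have E : forall b0 b1 b2, G p0 p1 p2 c q0 q1 q2 d r0 r1 r2 b0 b1 b2 = b0 && (b1 || b2).
  move=> b0 b1 b2; have := H (Xin b0 b1 b2).
  by rewrite HG /f3 !Xin0 !Xin1 !Xin2.
have := keyG p0 p1 p2 c q0 q1 q2 d r0 r1 r2.
by rewrite /xs8 !E.
Qed.

Theorem mainTheorem6 :
  (forall C : numClosedFieldType,
     exact_in_queries C f3 2 /\ (forall t, (t < 2)%N -> ~ exact_in_queries C f3 t))
  /\
  (forall T : pdt 3, (forall x : 'I_3 -> bool, pdt_eval T x = f3 x) ->
     (3 <= pdt_depth T)%N).
Proof.
split; last exact: pdt_lower.
by move=> C; split; [exact: upper | exact: lower].
Qed.
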